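(* Let $T$ be a tree of order $n$ with $\operatorname{diam}(T)\geq 4$, and let $T_1$ be a tree obtained from $T$ by a proper generalized tree shift. Then $\lambda_1(\overline{T_1})> \lambda_1(\overline{T})$, where $\lambda_1(G)$ denotes the distance spectral radius of $G$ and $\overline{G}$ denotes the complement of $G$.
   Context: For a connected graph $G$, the distance matrix $D(G)$ has $(v_i,v_j)$-entry equal to the length of a shortest path between $v_i$ and $v_j$ in $G$; its largest eigenvalue is the distance spectral radius $\lambda_1(G)$. The complement $\overline{G}$ has the same vertex set as $G$, with two distinct vertices adjacent iff they are non-adjacent in $G$. Generalized tree shift (GTS): let $T$ be a tree and $u,v\in V(T)$ such that all interior vertices of the path $uPv$ from $u$ to $v$ in $T$ (if any) have degree $2$. Let $w$ be the neighbor of $v$ on the path $uPv$ (possibly $w=u$). The tree $T_1$ is obtained from $T$ by deleting all edges between $v$ and $N_T(v)\setminus\{w\}$ and adding all edges between $u$ and $N_T(v)\setminus\{w\}$ (here $N_T(v)$ is the set of neighbours of $v$ in $T$). The GTS is called proper if neither $u$ nor $v$ is a pendant vertex (degree-one vertex) of $T$; in that case $T_1$ has one more pendant vertex than $T$. *)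

(* Defs.v *)
From mathcomp Require Import all_boot all_order all_algebra.
From mathcomp Require Import all_classical all_reals.
Set Implicit Arguments. Unset Strict Implicit. Unset Printing Implicit Defensive.
Import Order.TTheory GRing.Theory Num.Theory.

(* A simple graph on a finite vertex type V is a symmetric irreflexive
   relation e : rel V (hypotheses stated in the theorem). *)
Section Graphs.
Variable V : finType.
Implicit Types (e : rel V) (x y : V).

Definition deg e x : nat := #|[set y | e x y]|.

Fixpoint dwalk e (k : nat) x y : bool :=
  if k is k'.+1 then [exists z, e x z && dwalk e k' z y] else x == y.

(* shortest-path distance: least k < #|V| such that a walk of length k
   exists (meaningful for connected graphs; then it is < #|V|). *)
Definition gdist e x y : nat := find (fun k => dwalk e k x y) (iota 0 #|V|).

Definition diam e : nat := \max_(p : V * V) gdist e p.1 p.2.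

Definition gconnected e : Prop := forall x y, connect e x y.

Definition acyclic e : Prop :=
  forall c : seq V, uniq c -> 3 <= size c -> ~~ cycle e c.

Definition is_tree e : Prop := gconnected e /\ acyclic e.

Definition compl e : rel V := fun x y => (x != y) && ~~ e x y.

(* Generalized tree shift: the tree obtained from e by moving the neighbours
   N(v)\{w} of v to u. *)
Definition gts_graph e (u v w : V) : rel V :=
  let S := fun y => e v y && (y != w) in
  fun x y =>
    [|| [&& e x y, ~~ ((x == v) && S y) & ~~ ((y == v) && S x)],
        (x == u) && S y | (y == u) && S x].

(* Hypotheses of a GTS: u <> v, the path u = x0, p', w, v in the tree has all
   interior vertices (those of p' and w, unless w = u) of degree 2.
   The sequence u :: rcons p v with p = rcons p' w (or p = [::] when w = u). *)
Definition gts_data e (u v w : V) : Prop :=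
  exists p : seq V,
    [/\ path e u (rcons p v), uniq (u :: rcons p v),
        w = last u p & all (fun z => deg e z == 2) p].

Definition proper_gts e (u v : V) : Prop := deg e u != 1 /\ deg e v != 1.

End Graphs.

Definition dist_mx (R : realType) (n : nat) (e : rel 'I_n) : 'M[R]_n :=
  \matrix_(i, j) ((gdist e i j)%:R)%R.

(* l is the largest eigenvalue (the spectral radius for distance matrices) *)
Definition largest_eig (R : realType) (n : nat) (A : 'M[R]_n) (l : R) : Prop :=
  eigenvalue A l /\ (forall m, eigenvalue A m -> (m <= l)%R).

(* Main.v *)
Require Import Defs.
From mathcomp Require Import all_boot all_order all_algebra.
From mathcomp Require Import all_classical all_reals all_analysis.
From mathcomp Require Import ring lra zify.
Import Order.TTheory GRing.Theory Num.Theory numFieldNormedType.Exports.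
Set Implicit Arguments. Unset Strict Implicit. Unset Printing Implicit Defensive.

Section G.
Variable V : finType.
Variable e : rel V.

Lemma dwalk_cat a b x y z : dwalk e a x y -> dwalk e b y z -> dwalk e (a + b) x z.
Proof.
elim: a x => [|a IH] x /=; first by move/eqP->.
move=> /existsP [t /andP [ext hw]] hb; apply/existsP; exists t.
by rewrite ext (IH _ hw hb).
Qed.

Lemma dwalk_rcons k x y :
  dwalk e k.+1 x y = [exists z, dwalk e k x z && e z y].
Proof.
elim: k x => [|k IH] x.
  apply/idP/idP => /existsP [z /andP [h1 h2]]; apply/existsP.
    by exists x; move/eqP: h2 => h2; subst z; rewrite /= eqxx h1.
  by exists y; move: h1 => /= /eqP h1; subst z; rewrite h2 eqxx.
apply/idP/idP.
  move=> /existsP [t /andP [ext hw]].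
  have : dwalk e k.+1 t y by exact: hw.
  rewrite IH => /existsP [z /andP [h1 h2]].
  apply/existsP; exists z; rewrite h2 andbT /=; apply/existsP; exists t.
  by rewrite ext h1.
move=> /existsP [z /andP [/existsP [t /andP [ext h1]] h2]].
apply/existsP; exists t; rewrite ext /=.
have : dwalk e k.+1 t y by rewrite IH; apply/existsP; exists z; apply/andP; split.
by [].
Qed.

Hypothesis se : symmetric e.

Lemma dwalk_sym k x y : dwalk e k x y = dwalk e k y x.
Proof.
suff H : forall k x y, dwalk e k x y -> dwalk e k y x.
  by apply/idP/idP; apply: H.
elim=> [|k' IH] x' y'; first by rewrite /= eq_sym.
rewrite dwalk_rcons => /existsP [t /andP [hw ext]].
apply/existsP; exists t; apply/andP; split; first by rewrite se.
exact: IH.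
Qed.

Lemma gdist_sym x y : gdist e x y = gdist e y x.
Proof. by rewrite /gdist; apply: eq_find => k; rewrite dwalk_sym. Qed.

End G.

Section G2.
Variable V : finType.
Variable e : rel V.

Lemma gdist_le x y k : dwalk e k x y -> (k < #|V|)%N -> (gdist e x y <= k)%N.
Proof.
move=> hw hk; rewrite leqNgt; apply/negP => hlt.
have := before_find 0 hlt; rewrite nth_iota // add0n hw //.
Qed.

Lemma gdist_ge x y k : (forall j, (j < k)%N -> ~~ dwalk e j x y) -> (k <= #|V|)%N ->
  (k <= gdist e x y)%N.
Proof.
move=> hn hk; rewrite leqNgt; apply/negP; rewrite /gdist => hlt.
have hs : has (fun k => dwalk e k x y) (iota 0 #|V|).
  by rewrite has_find size_iota; exact: leq_trans hlt hk.
have := nth_find 0 hs; rewrite nth_iota; last first.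
  by move: hs; rewrite has_find size_iota.
by rewrite add0n (negbTE (hn _ hlt)).
Qed.

Lemma gdist_le_card x y : (gdist e x y <= #|V|)%N.
Proof. by rewrite /gdist; have := find_size (fun k => dwalk e k x y) (iota 0 #|V|); rewrite size_iota. Qed.

Lemma gdist_xx x : gdist e x x = 0%N.
Proof.
apply/eqP; rewrite -leqn0; apply: gdist_le; first by rewrite /= eqxx.
by apply/card_gt0P; exists x.
Qed.

Lemma gdist_neq x y : x != y -> (1 <= gdist e x y)%N.
Proof.
move=> nxy; apply: gdist_ge; first by case=> //= _; rewrite (negbTE nxy).
by apply/card_gt0P; exists x.
Qed.

End G2.

Section G3.
Variable V : finType.

Lemma diam_card (e : rel V) : (4 <= diam e)%N -> (4 <= #|V|)%N.
Proof.
move=> d4; apply: (leq_trans d4); rewrite /diam; apply/bigmax_leqP => p _.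
exact: gdist_le_card.
Qed.

Lemma compl_sym (f : rel V) : symmetric f -> symmetric (compl f).
Proof. by move=> sf x y; rewrite /compl eq_sym sf. Qed.

Lemma compl_adj2 (e : rel V) : symmetric e -> (4 <= diam e)%N ->
  forall i j, e i j -> exists z, compl e i z && compl e z j.
Proof.
move=> se d4 i j eij.
case: (boolP [exists z, compl e i z && compl e z j]) => [/existsP//|/existsPn hn].
exfalso.
have n4 := diam_card d4.
have hz : forall z, exists2 p, (p == i) || (p == j) & exists2 d, (d <= 1)%N & dwalk e d z p.
  move=> z; have := hn z; rewrite /compl => hnz.
  case: (eqVneq z i) => [->|nzi]; first by exists i; rewrite ?eqxx //; exists 0%N; rewrite //= eqxx.
  case eiz: (e i z).
    exists i; rewrite ?eqxx //; exists 1%N => //=; apply/existsP; exists i.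
    by rewrite se eiz eqxx.
  case: (eqVneq z j) => [->|nzj]; first by exists j; rewrite ?eqxx ?orbT //; exists 0%N; rewrite //= eqxx.
  move: hnz; rewrite eq_sym nzi eiz /= nzj /=; case ezj: (e z j) => // _.
  exists j; rewrite ?eqxx ?orbT //; exists 1%N => //=; apply/existsP; exists j.
  by rewrite ezj eqxx.
have : (diam e <= 3)%N.
  rewrite /diam; apply/bigmax_leqP => [[a b]] _ /=.
  have [pa hpa [da hda wa]] := hz a.
  have [pb hpb [db hdb wb]] := hz b.
  rewrite dwalk_sym // in wb.
  have [dm hdm wm] : exists2 dm, (dm <= 1)%N & dwalk e dm pa pb.
    case: (eqVneq pa pb) => [->|npab]; first by exists 0%N; rewrite //= eqxx.
    exists 1%N => //=; apply/existsP; exists pb; rewrite eqxx andbT.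
    move: hpa hpb npab; case/orP=> /eqP -> ; case/orP => /eqP -> //; rewrite ?eqxx //.
    by rewrite se.
  have w := dwalk_cat (dwalk_cat wa wm) wb.
  apply: leq_trans (gdist_le w _) _; first by apply: leq_ltn_trans n4; lia.
  lia.
by rewrite leqNgt; move/negP; apply; apply: leq_trans d4.
Qed.

Lemma gdist_compl_le (e : rel V) : symmetric e -> (4 <= diam e)%N -> forall i j,
  (gdist (compl e) i j <= (if i == j then 0 else if e i j then 2 else 1))%N.
Proof.
move=> se d4 i j; have n4 := diam_card d4.
case: (eqVneq i j) => [->|nij]; first by rewrite gdist_xx.
case eij: (e i j).
  have [z hz] := compl_adj2 se d4 eij.
  apply: gdist_le; last by apply: leq_ltn_trans n4.
  apply/existsP; exists z; case/andP: hz => -> /= h; apply/existsP; exists j.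
  by rewrite h eqxx.
apply: gdist_le; last by apply: leq_ltn_trans n4.
apply/existsP; exists j; rewrite /compl nij eij eqxx //.
Qed.

Lemma gdist_compl_ge (f : rel V) : (2 <= #|V|)%N -> forall i j,
  ((if i == j then 0 else if f i j then 2 else 1) <= gdist (compl f) i j)%N.
Proof.
move=> n2 i j.
case: (eqVneq i j) => [->|nij] //.
case fij: (f i j); last exact: gdist_neq.
apply: gdist_ge => // -[|[|k]] // _.
apply/existsP => -[z /andP [h /eqP ezj]]; subst z.
by move: h; rewrite /compl fij andbF.
Qed.

End G3.


Section P.
Variable V : finType.
Variable e : rel V.
Hypothesis se : symmetric e.
Hypothesis ie : irreflexive e.
Hypothesis ac : acyclic e.

Lemma no_chord (c : seq V) x0 i j :
  uniq c -> (forall t, (t.+1 < size c)%N -> e (nth x0 c t) (nth x0 c t.+1)) ->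
  (i.+2 <= j)%N -> (j < size c)%N -> ~~ e (nth x0 c j) (nth x0 c i).
Proof.
move=> uc hp hij hj; apply/negP => hji.
pose s := drop i (take j.+1 c).
have ss : size s = (j.+1 - i)%N.
  rewrite size_drop size_take; case: ifP => h //; lia.
have ns : forall t, (t < size s)%N -> nth x0 s t = nth x0 c (i + t).
  by move=> t ht; rewrite nth_drop nth_take //; rewrite ss in ht; lia.
have us : uniq s by apply: drop_uniq; apply: take_uniq.
have s3 : (3 <= size s)%N by rewrite ss; lia.
have := ac us s3; rewrite (cycle_path x0) => /negP; apply.
apply/(pathP x0) => t ht.
rewrite -nth_last ns; last by rewrite ss; lia.
case: t ht => [|t] ht /=.
  rewrite ns; last by lia.
  by rewrite ss addn0 (_ : (i + (j.+1 - i).-1 = j)%N) //; lia.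
rewrite !ns; try lia.
rewrite addnS; apply: hp; rewrite ss in ht; lia.
Qed.

Lemma idx_arith (k a b : nat) : (a <= k)%N -> (b <= k)%N ->
  ((k - a == (k - b).+1) || (k - b == (k - a).+1)) = ((a == b.+1) || (b == a.+1)).
Proof. move=> ha hb; apply/idP/idP => /orP [] /eqP h; apply/orP; lia. Qed.

Definition mv (f : rel V) a b (S : pred V) : rel V := fun x y =>
  [|| [&& f x y, ~~ ((x == a) && S y) & ~~ ((y == a) && S x)],
      (x == b) && S y | (y == b) && S x].

Lemma gts_mv u v w : gts_graph e u v w = mv e v u (fun y => e v y && (y != w)).
Proof. by []. Qed.


Variables (u v w : V) (p : seq V).
Hypothesis hpath : path e u (rcons p v).
Hypothesis huniq : uniq (u :: rcons p v).
Hypothesis hw : w = last u p.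
Hypothesis hdeg : all (fun z => deg e z == 2) p.

Let c := u :: rcons p v.
Let k := (size p).+1.

Lemma size_c : size c = k.+1.
Proof. by rewrite /c /= size_rcons. Qed.

Lemma c0 : nth u c 0 = u. Proof. by []. Qed.
Lemma ck : nth u c k = v.
Proof. by rewrite /c /k /= nth_rcons ltnn eqxx. Qed.
Lemma cw : nth u c k.-1 = w.
Proof.
rewrite /c /k /= -[u :: rcons p v]/(rcons (u :: p) v) nth_rcons /= ltnS leqnn.
by rewrite hw; exact: (nth_last u (u :: p)).
Qed.

Lemma c_path t : (t < k)%N -> e (nth u c t) (nth u c t.+1).
Proof.
move=> ht; move/(pathP u): hpath => /(_ t); rewrite size_rcons => /(_ ht).
by [].
Qed.

Lemma c_adj i j : (i <= k)%N -> (j <= k)%N ->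
  e (nth u c i) (nth u c j) = (i == j.+1) || (j == i.+1).
Proof.
move=> hi hj; apply/idP/idP; last first.
  case/orP => /eqP E; subst; last by apply: c_path; lia.
  by rewrite se; apply: c_path; lia.
move=> h; apply/negPn/negP; rewrite negb_or => /andP [n1 n2].
have hp : forall t, (t.+1 < size c)%N -> e (nth u c t) (nth u c t.+1).
  by move=> t; rewrite size_c => ht; apply: c_path; lia.
case: (ltngtP i j) => hij.
- have h1 : (i.+2 <= j)%N by lia.
  have h2 : (j < size c)%N by rewrite size_c; lia.
  by have := @no_chord c u i j huniq hp h1 h2; rewrite se h.
- have h1 : (j.+2 <= i)%N by lia.
  have h2 : (i < size c)%N by rewrite size_c; lia.
  by have := @no_chord c u j i huniq hp h1 h2; rewrite h.
- by subst j; rewrite ie in h.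
Qed.

Lemma c_nth_eq i j : (i <= k)%N -> (j <= k)%N -> (nth u c i == nth u c j) = (i == j).
Proof. by move=> hi hj; rewrite nth_uniq // size_c. Qed.

Lemma c_mem z : z \in c -> exists2 m, (m <= k)%N & z = nth u c m.
Proof.
move=> hz; exists (index z c); last by rewrite nth_index.
by rewrite -ltnS -size_c index_mem.
Qed.

Lemma c_in m : (m <= k)%N -> nth u c m \in c.
Proof. by move=> hm; apply: mem_nth; rewrite size_c. Qed.

Lemma card3 (z a b y : V) : e z a -> e z b -> e z y -> a != b -> y != a -> y != b ->
  (3 <= deg e z)%N.
Proof.
move=> za zb zy nab nya nyb.
have sub : y |: [set a; b] \subset [set t | e z t].
  apply/fintype.subsetP => t; rewrite !inE.
  by case/orP => [|/orP []] /eqP ->.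
apply: leq_trans _ (subset_leq_card sub).
by rewrite cardsU1 cards2 !inE negb_or nya nyb nab.
Qed.

Lemma c_int m y : (0 < m < k)%N -> e (nth u c m) y -> y \in c.
Proof.
move=> /andP [m0 mk] hy; apply/negPn/negP => ny.
have zp : nth u c m \in p.
  rewrite /c; case: m m0 mk {hy} => //= m _ mk.
  by rewrite nth_rcons (_ : (m < size p)%N = true) ?mem_nth //; lia.
have := allP hdeg _ zp => /eqP d2.
suff : (3 <= deg e (nth u c m))%N by rewrite d2.
apply: (@card3 (nth u c m) (nth u c m.-1) (nth u c m.+1) y) => //.
- by rewrite se (_ : m = (m.-1).+1) ?c_path //; lia.
- by apply: c_path.
- by rewrite c_nth_eq; lia.
- by apply: contraNneq ny => ->; apply: c_in; lia.
- by apply: contraNneq ny => ->; apply: c_in; lia.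
Qed.


Let c1 := nth u c 1.

Lemma S_notin s : e v s -> s != w -> s \notin c.
Proof.
move=> evs nsw; apply/negP => /c_mem [m hm E]; subst s.
move: evs; rewrite -ck c_adj // => /orP [/eqP E|/eqP E]; last lia.
by move: nsw; rewrite -cw E /= eqxx.
Qed.

Lemma U_notin t : e u t -> t != c1 -> t \notin c.
Proof.
move=> eut ntc; apply/negP => /c_mem [m hm E]; subst t.
move: eut; rewrite -{1}c0 c_adj // => /orP [/eqP E|/eqP E] //.
by move: ntc; rewrite E eqxx.
Qed.

Lemma no_tri s : s \notin c -> e v s -> e s u -> False.
Proof.
move=> sc evs esu.
have u1 : uniq (rcons c s) by rewrite rcons_uniq sc huniq.
have s3 : (3 <= size (rcons c s))%N by rewrite size_rcons size_c.
have := ac u1 s3; rewrite /c /= rcons_path rcons_path hpath last_rcons evs /=.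
by rewrite last_rcons esu.
Qed.

Lemma uv_k1 : e u v -> k = 1%N.
Proof.
by rewrite -{1}c0 -ck c_adj // => /orP [/eqP|/eqP] //.
Qed.

Definition psig z := if z \in c then nth u c (k - index z c) else z.

Lemma psig_nth m : (m <= k)%N -> psig (nth u c m) = nth u c (k - m).
Proof. by move=> hm; rewrite /psig c_in // index_uniq // size_c. Qed.

Lemma psig_out z : z \notin c -> psig z = z.
Proof. by move=> hz; rewrite /psig (negbTE hz). Qed.

Lemma psigK : involutive psig.
Proof.
move=> z; case: (boolP (z \in c)) => hz; last by rewrite !psig_out.
have [m hm ->] := c_mem hz.
by rewrite !psig_nth ?leq_subr // subKn.
Qed.

Lemma mv_in (f : rel V) a b (T : pred V) x y : T x = false -> T y = false ->
  mv f a b T x y = f x y.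
Proof. by move=> Tx Ty; rewrite /mv Tx Ty !andbF /= !orbF andbT. Qed.

Lemma mv_out (f : rel V) a b (T : pred V) x y : x != a -> x != b -> y != a -> y != b ->
  mv f a b T x y = f x y.
Proof.
move=> xa xb ya yb; rewrite /mv (negbTE xa) (negbTE xb) (negbTE ya) (negbTE yb) /=.
by rewrite orbF andbT.
Qed.

Lemma mv_sym (f : rel V) a b (T : pred V) : symmetric f -> symmetric (mv f a b T).
Proof.
move=> sf x y; rewrite /mv sf.
by case: (f y x); case: (x == a); case: (y == a); case: (x == b); case: (y == b);
  case: (T x); case: (T y).
Qed.

Lemma psig_gts i j :
  gts_graph e u v w (psig i) (psig j) = mv e u v (fun t => e u t && (t != c1)) i j.
Proof.
rewrite gts_mv.
set S := fun y => e v y && (y != w).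
set U := fun t => e u t && (t != c1).
have Sc : forall z, z \in c -> S z = false.
  move=> z zc; rewrite /S; apply/negP => /andP [h1 h2].
  by move: (S_notin h1 h2); rewrite zc.
have Uc : forall z, z \in c -> U z = false.
  move=> z zc; rewrite /U; apply/negP => /andP [h1 h2].
  by move: (U_notin h1 h2); rewrite zc.
have uc : u \in c by rewrite -c0 c_in.
have vc : v \in c by rewrite -ck c_in.
have wc : w \in c by rewrite -cw c_in //; lia.
have neq_uv : u != v by rewrite -c0 -ck c_nth_eq.
have uv0 : (u == v) = false by exact: negbTE neq_uv.
have vu0 : (v == u) = false by rewrite eq_sym.
have half : forall i j, j \notin c ->
    mv e v u S (psig i) (psig j) = mv e u v U i j.
  move=> x y yc; rewrite (psig_out yc).
  have yu : y != u by apply: contraNneq yc => ->.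
  have yv : y != v by apply: contraNneq yc => ->.
  have yw : y != w by apply: contraNneq yc => ->.
  case: (boolP (x \in c)) => xc; last first.
    rewrite (psig_out xc) mv_out ?mv_out //; try by apply: contraNneq xc => ->.
  have [m hm E] := c_mem xc; subst x; rewrite psig_nth //.
  case: (eqVneq m 0%N) => [->|m0].
    rewrite subn0 ck c0 /mv !eqxx uv0 vu0.
    rewrite (negbTE yu) (negbTE yv) /S /U yw /=.
    have yc1 : y != c1 by apply: contraNneq yc => ->; rewrite /c1 c_in.
    rewrite yc1 /=.
    by case: (e v y); case: (e u y).
  case: (eqVneq m k) => [->|mk].
    rewrite subnn ck c0 /mv !eqxx uv0 vu0.
    rewrite (negbTE yu) (negbTE yv) /S /U yw /=.
    have yc1 : y != c1 by apply: contraNneq yc => ->; rewrite /c1 c_in.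
    rewrite yc1 /= !andbT !orbF.
    by case: (e v y); case: (e u y).
  have hin : forall t, (0 < t < k)%N -> (nth u c t != u) && (nth u c t != v).
    move=> t /andP [t0 tk]; apply/andP; split.
      have h0 : (0 <= k)%N by [].
      have ht : (t <= k)%N by apply: ltnW.
      by rewrite -{2}c0 c_nth_eq // -lt0n.
    have ht : (t <= k)%N by apply: ltnW.
    by rewrite -ck c_nth_eq // neq_ltn tk.
  have r1 : (0 < k - m < k)%N.
    apply/andP; split. rewrite subn_gt0 ltn_neqAle mk hm //. 
    rewrite ltn_subrL lt0n m0 /=. rewrite /k //.
  have r2 : (0 < m < k)%N by rewrite lt0n m0 ltn_neqAle mk hm.

  have /andP [h1 h2] := hin _ r1.
  have /andP [h3 h4] := hin _ r2.
  rewrite mv_out // mv_out //.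
  have f1 : e (nth u c (k - m)) y = false.
    by apply/negP => /(c_int r1); rewrite (negbTE yc).
  have f2 : e (nth u c m) y = false.
    by apply/negP => /(c_int r2); rewrite (negbTE yc).
  by rewrite f1 f2.
case: (boolP (j \in c)) => jc; last exact: half.
case: (boolP (i \in c)) => ic; last first.
  by rewrite (mv_sym _ _ _ se) [RHS](mv_sym _ _ _ se) half.
have [a ha Ea] := c_mem ic; have [b hb Eb] := c_mem jc; subst i j.
rewrite !psig_nth // mv_in; try by apply: Sc; apply: c_in; apply: leq_subr.
rewrite mv_in; try by apply: Uc; apply: c_in.
by rewrite !c_adj ?leq_subr // idx_arith.
Qed.

Lemma deg_nb z a : e z a -> deg e z != 1%N -> exists t, e z t && (t != a).
Proof.
move=> eza d1.
case: (boolP [exists t, e z t && (t != a)]) => [/existsP //|/existsPn hn].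
exfalso; move: d1; rewrite /deg; apply/negP/negPn.
have -> : [set t | e z t] = [set a].
  apply/setP => t; rewrite !inE; case: (eqVneq t a) => [->|nta]; first by rewrite eza.
  by move: (hn t); rewrite nta andbT => /negbTE.
by rewrite cards1.
Qed.

Lemma caseA_S s : e v s && (s != w) -> [/\ e v s, s != u & ~~ e u s].
Proof.
case/andP => evs nsw; have sc := S_notin evs nsw.
split => //; first by apply: contraNneq sc => ->; rewrite -c0 c_in.
by apply/negP => eus; apply: (no_tri sc evs); rewrite se.
Qed.

Lemma caseA_ex : deg e v != 1%N -> exists s, e v s && (s != w).
Proof.
move=> dv; apply: deg_nb dv.
have hk : (k.-1 <= k)%N by apply: leq_pred.
by rewrite -ck -cw c_adj // /k /= eqxx.
Qed.

Lemma caseB_U t : e u t && (t != c1) -> [/\ e u t, t != v & ~~ e v t].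
Proof.
case/andP => eut ntc; have tc := U_notin eut ntc.
split => //; first by apply: contraNneq tc => ->; rewrite -ck c_in.
by apply/negP => evt; apply: (no_tri tc evt); rewrite se.
Qed.

Lemma caseB_ex : deg e u != 1%N -> exists t, e u t && (t != c1).
Proof.
move=> du; apply: deg_nb du.
by rewrite -{1}c0 /c1 c_adj // /k.
Qed.

Lemma u_neq_v : u != v.
Proof. by rewrite -c0 -ck c_nth_eq. Qed.

End P.

Local Open Scope ring_scope.

Section Ray.
Variable R : realType.
Local Open Scope classical_set_scope.

Lemma cont_sum (T : topologicalType) (I : Type) (r : seq I) (F : I -> T -> R) :
  (forall i, continuous (F i)) -> continuous (fun x => \sum_(i <- r) F i x).
Proof.
move=> H; elim: r => [|a r IH].
  under eq_fun do rewrite big_nil. exact: cst_continuous.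
under eq_fun do rewrite big_cons.
move=> x; apply: (@continuousD _ R^o). exact: H. exact: IH.
Qed.

Lemma cont_mul (T : topologicalType) (f g : T -> R) :
  continuous f -> continuous g -> continuous (fun x => f x * g x).
Proof. move=> hf hg x; exact: (cvgM (hf x) (hg x)). Qed.

Lemma coord_c n (j : 'I_n) : continuous (fun x : 'rV[R]_n => x 0 j).
Proof. exact: coord_continuous. Qed.

Definition qf n (M : 'M[R]_n) (x : 'rV[R]_n) := (x *m M *m x^T) 0 0.
Definition nrm n (x : 'rV[R]_n) := (x *m x^T) 0 0.

Lemma qfE n (M : 'M[R]_n) x : qf M x = \sum_j (\sum_i x 0 i * M i j) * x 0 j.
Proof. rewrite /qf !mxE; apply: eq_bigr => j _; rewrite !mxE; done. Qed.

Lemma nrmE n (x : 'rV[R]_n) : nrm x = \sum_j x 0 j ^+ 2.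
Proof. rewrite /nrm !mxE; apply: eq_bigr => j _; rewrite !mxE expr2; done. Qed.

Lemma qf_cont n (M : 'M[R]_n) : continuous (qf M).
Proof.
have -> : qf M = (fun x => \sum_j (\sum_i x 0 i * M i j) * x 0 j).
  by apply: funext => x; rewrite qfE.
apply: cont_sum => j; apply: cont_mul; last exact: coord_c.
apply: cont_sum => i; apply: cont_mul; first exact: coord_c.
exact: cst_continuous.
Qed.

Lemma nrm_cont n : continuous (@nrm n).
Proof.
have -> : @nrm n = (fun x => \sum_j x 0 j * x 0 j).
  by apply: funext => x; rewrite nrmE; under eq_bigr do rewrite expr2.
apply: cont_sum => j; apply: cont_mul; exact: coord_c.
Qed.

Lemma nrm_ge0 n (x : 'rV[R]_n) : 0 <= nrm x.
Proof. rewrite nrmE; apply: sumr_ge0 => j _; exact: sqr_ge0. Qed.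

Lemma nrm_coord n (x : 'rV[R]_n) j : x 0 j ^+ 2 <= nrm x.
Proof.
rewrite nrmE (bigD1 j) //= lerDl; apply: sumr_ge0 => k _; exact: sqr_ge0.
Qed.

Lemma nrm_eq0 n (x : 'rV[R]_n) : nrm x = 0 -> x = 0.
Proof.
move=> h; apply/rowP => j; rewrite mxE.
have : x 0 j ^+ 2 <= 0 by rewrite -h nrm_coord.
by rewrite le_eqVlt ltNge sqr_ge0 orbF sqrf_eq0 => /eqP.
Qed.

Lemma qfZ n (M : 'M[R]_n) a x : qf M (a *: x) = a ^+ 2 * qf M x.
Proof.
rewrite /qf linearZ /= -scalemxAl -scalemxAl -scalemxAr !mxE.
by rewrite expr2 mulrA.
Qed.

Lemma nrmZ n a (x : 'rV[R]_n) : nrm (a *: x) = a ^+ 2 * nrm x.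
Proof.
rewrite /nrm linearZ /= -scalemxAl -scalemxAr !mxE.
by rewrite expr2 mulrA.
Qed.

Lemma e00D (A B : 'M[R]_1) : (A + B) 0 0 = A 0 0 + B 0 0.
Proof. by rewrite mxE. Qed.
Lemma e00Z a (A : 'M[R]_1) : (a *: A) 0 0 = a * A 0 0.
Proof. by rewrite mxE. Qed.

Lemma qfD n (M : 'M[R]_n) (x y : 'rV[R]_n) : M^T = M ->
  qf M (x + y) = qf M x + 2 * (x *m M *m y^T) 0 0 + qf M y.
Proof.
move=> sM.
have h : (y *m M *m x^T) 0 0 = (x *m M *m y^T) 0 0.
  transitivity ((y *m M *m x^T)^T 0 0); first by rewrite [RHS]mxE.
  by rewrite !trmx_mul trmxK sM mulmxA.
rewrite /qf linearD /= !mulmxDl !mulmxDr !e00D h; ring.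
Qed.

Lemma nrmD n (x y : 'rV[R]_n) :
  nrm (x + y) = nrm x + 2 * (x *m y^T) 0 0 + nrm y.
Proof.
have h : (y *m x^T) 0 0 = (x *m y^T) 0 0.
  transitivity ((y *m x^T)^T 0 0); first by rewrite [RHS]mxE.
  by rewrite !trmx_mul trmxK.
rewrite /nrm linearD /= !mulmxDl !mulmxDr !e00D h; ring.
Qed.

Lemma psd_zero (D G : R) : 0 <= D -> 0 <= G ->
  (forall t, 0 <= - (2 * t * D) + t ^+ 2 * G) -> D = 0.
Proof.
move=> D0 G0 h; apply/eqP; rewrite eq_le D0 andbT; apply/negP => /negP.
rewrite -ltNge => Dp.
have := h (D / (G + 1)).
have G1 : 0 < G + 1 by lra.
set t := D / (G + 1).
have -> : t ^+ 2 * G = t * (t * G) by rewrite expr2 mulrA.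
have tG : t * G < D.
  rewrite /t mulrAC ltr_pdivrMr // mulrDr mulr1; nra.
have tp : 0 < t by rewrite /t divr_gt0.
nra.
Qed.

Lemma qf_eig n (M : 'M[R]_n) m x : x *m M = m *: x -> qf M x = m * nrm x.
Proof. by move=> h; rewrite /qf h -scalemxAl e00Z. Qed.

Lemma maximizer n (M : 'M[R]_n) l c : M^T = M ->
  (forall x, qf M x <= l * nrm x) -> qf M c = l * nrm c -> c *m M = l *: c.
Proof.
move=> sM bnd hc.
pose d := c *m M - l *: c.
have g0 : forall z, 0 <= l * nrm z - qf M z by move=> z; rewrite subr_ge0.
have key : forall t, 0 <= - (2 * t * nrm d) + t ^+ 2 * (l * nrm d - qf M d).
  move=> t; have := g0 (c + t *: d).
  rewrite qfD // nrmD qfZ nrmZ.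
  have -> : (c *m M *m (t *: d)^T) 0 0 = t * ((c *m M) *m d^T) 0 0.
    by rewrite linearZ /= -scalemxAr e00Z.
  have -> : (c *m (t *: d)^T) 0 0 = t * (c *m d^T) 0 0.
    by rewrite linearZ /= -scalemxAr e00Z.
  have -> : ((c *m M) *m d^T) 0 0 = nrm d + l * (c *m d^T) 0 0.
    have e : c *m M = d + l *: c by rewrite /d subrK.
    by rewrite {1}e mulmxDl -scalemxAl e00D e00Z.
  rewrite hc; move=> h; nra.
have := psd_zero (nrm_ge0 d) (g0 d) key.
by move=> /nrm_eq0 /eqP; rewrite subr_eq0 => /eqP.
Qed.

Lemma rayleigh n (M : 'M[R]_n) : (0 < n)%N -> M^T = M ->
  exists l (c : 'rV[R]_n),
    [/\ nrm c = 1, c *m M = l *: c & forall x, qf M x <= l * nrm x].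
Proof.
move=> n0 sM.
pose S := [set x : 'rV[R]_n | nrm x = 1].
have S0 : S !=set0.
  exists (delta_mx 0 (Ordinal n0)); rewrite /S /= nrmE (bigD1 (Ordinal n0)) //=.
  rewrite big1 ?mxE ?eqxx /= ?expr1n ?addr0 // => j /negbTE hj.
  by rewrite mxE hj andbF expr0n.
have cS : compact S.
  apply: (@subclosed_compact _ S [set v : 'rV[R]_n | forall i, `[-1, 1]%classic (v ord0 i)]).
  - have -> : S = (@nrm n) @^-1` [set x | x = 1] by [].
    apply: preimage_closed; first by move=> z _; exact: nrm_cont.
    exact: closed_eq.
  - apply: (@rV_compact R n (fun _ => `[-1, 1]%classic)) => _.
    exact: segment_compact.
  - move=> x /= Sx i; rewrite /= in_itv /=.
    have := nrm_coord x i; rewrite Sx => h.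
    apply/andP; split; nra.
have [c cinS cmax] := EVT_max_rV S0 cS (continuous_subspaceT (@qf_cont n M)).
have Sc : nrm c = 1 by move: cinS; rewrite inE.
set l := qf M c.
have bnd : forall x, qf M x <= l * nrm x.
  move=> x; have [x0|xn0] := eqVneq (nrm x) 0.
    by rewrite x0 (nrm_eq0 x0) /qf !mul0mx mxE mulr0.
  have xp : 0 < nrm x by rewrite lt_neqAle eq_sym xn0 nrm_ge0.
  pose a := (Num.sqrt (nrm x))^-1.
  have a2 : a ^+ 2 = (nrm x)^-1 by rewrite /a exprVn sqr_sqrtr // ltW.
  have : qf M (a *: x) <= l.
    apply: cmax; rewrite inE /S /= nrmZ a2 mulVf //.
  rewrite qfZ a2 => h.
  have := ler_wpM2r (ltW xp) h.
  by rewrite mulrAC mulVf // mul1r.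
exists l, c; split => //.
by apply: maximizer => //; rewrite Sc mulr1.
Qed.

Lemma largest_of n (M : 'M[R]_n) l c : nrm c = 1 -> c *m M = l *: c ->
  (forall x, qf M x <= l * nrm x) -> largest_eig M l.
Proof.
move=> nc hc bnd; split.
  apply/eigenvalueP; exists c => //; apply/eqP => c0.
  by move: nc; rewrite c0 /nrm mul0mx mxE => /eqP; rewrite eq_sym oner_eq0.
move=> m /eigenvalueP [x hx xn0].
have np : 0 < nrm x.
  rewrite lt_neqAle nrm_ge0 andbT; apply/eqP => /esym /nrm_eq0 x0.
  by rewrite x0 eqxx in xn0.
have := bnd x; rewrite (qf_eig hx).
by rewrite ler_pM2r.
Qed.

End Ray.


Section M.
Variable R : realType.
Variable n : nat.
Implicit Types (A B : 'M[R]_n) (x : 'rV[R]_n).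

Definition Bm (f : rel 'I_n) : 'M[R]_n :=
  \matrix_(i, j) ((if i == j then 0 else if f i j then 2 else 1)%N)%:R.

Lemma qfE2 A x : qf A x = \sum_j \sum_i x 0 i * A i j * x 0 j.
Proof. by rewrite qfE; apply: eq_bigr => j _; rewrite mulr_suml. Qed.

Lemma qf_le_entry A B x : (forall i j, A i j <= B i j) -> (forall i, 0 <= x 0 i) ->
  qf A x <= qf B x.
Proof.
move=> hAB hx; rewrite !qfE2; apply: ler_sum => j _; apply: ler_sum => i _.
apply: ler_wpM2r => //; apply: ler_wpM2l => //.
Qed.

Lemma qf_abs A (c : 'rV[R]_n) : (forall i j, 0 <= A i j) -> qf A c <= qf A (\row_i `|c 0 i|).
Proof.
move=> hA; rewrite !qfE2; apply: ler_sum => j _; apply: ler_sum => i _.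
rewrite !mxE; apply: le_trans (ler_norm _) _.
by rewrite !normrM (ger0_norm (hA i j)).
Qed.

Lemma nrm_abs (c : 'rV[R]_n) : nrm (\row_i `|c 0 i|) = nrm c.
Proof. by rewrite !nrmE; apply: eq_bigr => i _; rewrite mxE real_normK ?num_real. Qed.

Lemma pos_of_eig A x l : (forall i j, 0 <= A i j) -> (forall i j, i != j -> 1 <= A i j) ->
  (forall i, 0 <= x 0 i) -> x *m A = l *: x -> nrm x = 1 -> forall i, 0 < x 0 i.
Proof.
move=> A0 A1 x0 ex nx i; rewrite lt_neqAle x0 andbT eq_sym; apply/negP => /eqP xi0.
have h : \sum_j x 0 j * A j i = 0.
  by have := congr1 (fun M : 'rV[R]_n => M 0 i) ex; rewrite !mxE xi0 mulr0.
have hz : forall j, x 0 j * A j i = 0.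
  move=> j; move/eqP: h; rewrite psumr_eq0 => [/allP /(_ j) |j' _]; last first.
    by apply: mulr_ge0.
  by rewrite mem_index_enum => /(_ isT) /eqP.
have : x = 0.
  apply/rowP => j; rewrite mxE; case: (eqVneq j i) => [->//|nji].
  have := hz j; move/eqP; rewrite mulf_eq0 => /orP [/eqP //|/eqP Aji].
  by have := A1 _ _ nji; rewrite Aji ler10.
by move=> x00; move: nx; rewrite x00 /nrm mul0mx mxE => /eqP; rewrite eq_sym oner_eq0.
Qed.

Lemma qf_eq_entry A B x : (forall i j, A i j <= B i j) -> (forall i, 0 < x 0 i) ->
  qf A x = qf B x -> forall i j, A i j = B i j.
Proof.
move=> hAB hx hq i j.
have h : \sum_j \sum_i x 0 i * (B i j - A i j) * x 0 j = 0.
  have -> : \sum_j \sum_i x 0 i * (B i j - A i j) * x 0 j = qf B x - qf A x.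
    rewrite !qfE2 -sumrB; apply: eq_bigr => k _; rewrite -sumrB.
    by apply: eq_bigr => l _; ring.
  by rewrite hq subrr.
have ge : forall k l, 0 <= x 0 l * (B l k - A l k) * x 0 k.
  move=> k l; apply: mulr_ge0; last exact: ltW.
  by apply: mulr_ge0; [exact: ltW| rewrite subr_ge0].
move/eqP: h; rewrite psumr_eq0; last by move=> k _; apply: sumr_ge0 => l _.
move/allP => /(_ j (mem_index_enum _)) /= /eqP.
move/eqP; rewrite psumr_eq0 // => /allP /(_ i (mem_index_enum _)) /=.
rewrite !mulf_eq0 subr_eq0 => /orP [/orP [|/eqP //]|]; rewrite gt_eqF //.
Qed.


Section Move.
Variables (f : rel 'I_n) (a b : 'I_n) (S : pred 'I_n).
Hypotheses (sf : symmetric f) (irf : irreflexive f) (ab : a != b)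
  (hS : forall s, S s -> [/\ f a s, s != b & ~~ f b s]).

Lemma S_a : S a = false.
Proof. by apply/negP => /hS [h _ _]; rewrite irf in h. Qed.
Lemma S_b : S b = false.
Proof. by apply/negP => /hS [_ h _]; rewrite eqxx in h. Qed.
Lemma S_neq s t : S s -> S t = false -> s != t.
Proof. by move=> Ss St; apply/eqP => E; subst; rewrite Ss in St. Qed.

Lemma Bm_move_entry i j :
  Bm (mv f a b S) i j - Bm f i j =
  ((i == b) && S j)%:R + ((j == b) && S i)%:R - ((i == a) && S j)%:R - ((j == a) && S i)%:R :> R.
Proof.
have Sa := S_a; have Sb := S_b.
rewrite !mxE.
case Sj: (S j); case Si: (S i); rewrite ?andbT ?andbF.
- have ia := S_neq Si Sa; have ib := S_neq Si Sb.
  have ja := S_neq Sj Sa; have jb := S_neq Sj Sb.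
  rewrite mv_out // (negbTE ia) (negbTE ib) (negbTE ja) (negbTE jb).
  by rewrite subrr /= !mulr0n !subr0 addr0.
- have ja := S_neq Sj Sa; have jb := S_neq Sj Sb.
  case: (eqVneq i b) => [E|ib].
    subst i; rewrite eq_sym (negbTE jb) /mv eqxx Sj /=.
    have [_ _ /negbTE ->] := hS Sj.
    rewrite eq_sym (negbTE ab) /=; lra.
  case: (eqVneq i a) => [E|ia].
    subst i; rewrite eq_sym (negbTE ja) /mv eqxx Sj (negbTE ab) (negbTE jb) /=.
    have [-> _ _] := hS Sj.
    rewrite andbF /=; lra.
  by rewrite mv_out // ?(negbTE ia) ?(negbTE ib) /= subrr; lra.
- have ia := S_neq Si Sa; have ib := S_neq Si Sb.
  case: (eqVneq j b) => [E|jb].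
    subst j; rewrite (negbTE ib) /mv eqxx Si /= !orbT.
    have [_ _ hb] := hS Si.
    rewrite sf (negbTE hb) eq_sym (negbTE ab) /=; lra.
  case: (eqVneq j a) => [E|ja].
    subst j; rewrite (negbTE ia) /mv eqxx Si (negbTE ab) (negbTE ib) /=.
    have [h _ _] := hS Si.
    rewrite sf h andbF /=; lra.
  by rewrite mv_out // ?(negbTE ja) ?(negbTE jb) /= subrr; lra.
- by rewrite mv_in // subrr /=; lra.
Qed.

Definition Pl (c : 'I_n) : 'M[R]_n := \matrix_(i, j) ((i == c) && S j)%:R.
Definition Pr (c : 'I_n) : 'M[R]_n := \matrix_(i, j) ((j == c) && S i)%:R.
Definition sS (x : 'rV[R]_n) := \sum_j (S j)%:R * x 0 j.

Lemma qf_Pl c x : qf (Pl c) x = x 0 c * sS x.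
Proof.
rewrite qfE2 /sS mulr_sumr; apply: eq_bigr => j _.
rewrite (bigD1 c) //=.
rewrite big1; last first.
  by move=> i ni; rewrite mxE (negbTE ni) /= mulr0 mul0r.
by rewrite mxE eqxx /= addr0 mulrA.
Qed.

Lemma qf_Pr c x : qf (Pr c) x = x 0 c * sS x.
Proof.
rewrite qfE2 exchange_big /sS mulr_sumr; apply: eq_bigr => i _ /=.
rewrite (bigD1 c) //= big1; last first.
  by move=> j nj; rewrite mxE (negbTE nj) /= mulr0 mul0r.
by rewrite mxE eqxx /= addr0; ring.
Qed.

Lemma Bm_move_mx : Bm (mv f a b S) = Bm f + Pl b + Pr b - Pl a - Pr a.
Proof.
apply/matrixP => i j; rewrite !mxE.
have := Bm_move_entry i j; rewrite !mxE => h.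
rewrite -[LHS](subrK ((if i == j then 0%N else if f i j then 2%N else 1%N)%:R)) h.
by ring.
Qed.

Lemma qfDm (A B : 'M[R]_n) x : qf (A + B) x = qf A x + qf B x.
Proof. by rewrite /qf mulmxDr mulmxDl e00D. Qed.
Lemma qfBm (A B : 'M[R]_n) x : qf (A - B) x = qf A x - qf B x.
Proof.
have e00B : forall P Q : 'M[R]_1, (P - Q) 0 0 = P 0 0 - Q 0 0 by move=> P Q; rewrite !mxE.
by rewrite /qf mulmxBr mulmxBl e00B.
Qed.

Lemma qf_move x : qf (Bm (mv f a b S)) x = qf (Bm f) x + 2 * (x 0 b - x 0 a) * sS x.
Proof.
rewrite Bm_move_mx !qfBm !qfDm qf_Pl qf_Pr qf_Pl qf_Pr; ring.
Qed.

Lemma col_move x : (x *m Bm (mv f a b S)) 0 a - (x *m Bm f) 0 a = - sS x.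
Proof.
rewrite Bm_move_mx !mxE -sumrB /sS -sumrN; apply: eq_bigr => i _; rewrite !mxE.
rewrite S_a andbF (negbTE ab) eqxx /= andbF /= mulr0n !addr0 subr0; ring.
Qed.

End Move.

Lemma qf_perm (s : 'I_n -> 'I_n) (sK : involutive s) A x :
  qf A (\row_i x 0 (s i)) = qf (\matrix_(i, j) A (s i) (s j)) x.
Proof.
rewrite !qfE2 (reindex_inj (inv_inj sK)) /=; apply: eq_bigr => j _.
rewrite (reindex_inj (inv_inj sK)) /=; apply: eq_bigr => i _.
by rewrite !mxE !sK.
Qed.

Lemma nrm_perm (s : 'I_n -> 'I_n) (sK : involutive s) x :
  nrm (\row_i x 0 (s i)) = nrm x.
Proof.
rewrite !nrmE (reindex_inj (inv_inj sK)) /=; apply: eq_bigr => j _.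
by rewrite !mxE !sK.
Qed.

End M.


Theorem mainTheorem1 (R : realType) (n : nat) (e : rel 'I_n) (u v w : 'I_n) :
  symmetric e -> irreflexive e -> is_tree e ->
  (4 <= diam e)%N ->
  gts_data e u v w -> proper_gts e u v ->
  exists l0 l1 : R,
    [/\ largest_eig (dist_mx R (compl e)) l0,
        largest_eig (dist_mx R (compl (gts_graph e u v w))) l1 & l0 < l1].
Proof.
move=> se ie [_ ac] d4 [p [hpath huniq hw hdeg]] [du dv].
have n4 : (4 <= n)%N by have := diam_card d4; rewrite card_ord.
have n0 : (0 < n)%N by apply: leq_trans n4.
set g := gts_graph e u v w.
have sg : symmetric g by rewrite /g gts_mv; apply: mv_sym.
have sM : forall f : rel 'I_n, symmetric f -> (dist_mx R (compl f))^T = dist_mx R (compl f).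
  by move=> f sf; apply/matrixP => i j; rewrite !mxE gdist_sym //; apply: compl_sym.
set M0 := dist_mx R (compl e).
set M1 := dist_mx R (compl g).
have [l0 [c0 [nc0 ec0 b0]]] := rayleigh n0 (sM e se).
have [l1 [c1 [nc1 ec1 b1]]] := rayleigh n0 (sM g sg).
exists l0, l1; split; [exact: largest_of nc0 ec0 b0 | exact: largest_of nc1 ec1 b1 |].
have M0le : forall i j, M0 i j <= Bm R e i j.
  by move=> i j; rewrite !mxE ler_nat gdist_compl_le.
have M0ge : forall i j, 0 <= M0 i j by move=> i j; rewrite mxE ler0n.
have M0off : forall i j, i != j -> 1 <= M0 i j.
  by move=> i j nij; rewrite mxE ler1n gdist_neq.
have M1ge : forall i j, Bm R g i j <= M1 i j.
  move=> i j; rewrite !mxE ler_nat gdist_compl_ge // card_ord.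
  by apply: leq_trans n4.
pose x := \row_i `|c0 0 i|.
have x0 : forall i, 0 <= x 0 i by move=> i; rewrite mxE normr_ge0.
have nx : nrm x = 1 by rewrite nrm_abs.
have qx : qf M0 x = l0.
  apply/le_anti/andP; split; first by have := b0 x; rewrite nx mulr1.
  by have := qf_abs c0 M0ge; rewrite (qf_eig ec0) nc0 mulr1.
have ex : x *m M0 = l0 *: x.
  by apply: maximizer (sM e se) b0 _; rewrite qx nx mulr1.
have xp := pos_of_eig M0ge M0off x0 ex nx.
have q0 : qf M0 x <= qf (Bm R e) x := qf_le_entry M0le x0.
case: (lerP (x 0 v) (x 0 u)) => hxuv.
- pose S := fun y => e v y && (y != w).
  have hS : forall s, S s -> [/\ e v s, s != u & ~~ e u s].
    by move=> s; apply: (caseA_S se ie ac hpath huniq hw hdeg).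
  have vu : v != u by rewrite eq_sym (u_neq_v huniq).
  have sSpos : 0 < sS S x.
    have [s Ss] := caseA_ex se ie ac hpath huniq hw hdeg dv.
    rewrite /sS (bigD1 s) //= (_ : S s = true) // mul1r.
    apply: (lt_le_trans (xp s)); rewrite lerDl; apply: sumr_ge0 => j _.
    by apply: mulr_ge0 => //; exact: ler0n.
  have q1 : qf (Bm R g) x = qf (Bm R e) x + 2 * (x 0 u - x 0 v) * sS S x.
    exact: (qf_move se ie vu hS x).
  rewrite ltNge; apply/negP => l10.
  have q2 : qf (Bm R g) x <= qf M1 x := qf_le_entry M1ge x0.
  have q3 : qf M1 x <= l1 by have := b1 x; rewrite nx mulr1.
  have h1 : 0 <= 2 * (x 0 u - x 0 v) * sS S x.
    by apply: mulr_ge0; [apply: mulr_ge0 => //; rewrite subr_ge0 | exact: ltW].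
  have e0 : qf M0 x = qf (Bm R e) x by apply/le_anti/andP; split => //; lra.
  have e1 : qf (Bm R g) x = qf M1 x by apply/le_anti/andP; split => //; lra.
  have el : l1 = l0 by lra.
  have ex1 : x *m M1 = l1 *: x.
    by apply: maximizer (sM g sg) b1 _; rewrite nx mulr1; lra.
  have EB0 := qf_eq_entry M0le xp e0.
  have EB1 := qf_eq_entry M1ge xp e1.
  have := col_move se ie vu hS x.
  have -> : x *m Bm R g = x *m M1.
    by congr (_ *m _); apply/matrixP => i j; exact: EB1.
  have -> : x *m Bm R e = x *m M0.
    by congr (_ *m _); apply/matrixP => i j; rewrite EB0.
  rewrite ex ex1 el !mxE subrr => /eqP; rewrite eq_sym oppr_eq0 => /eqP h.
  by rewrite h ltxx in sSpos.
- pose U := fun t => e u t && (t != nth u (u :: rcons p v) 1).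
  have hU : forall t, U t -> [/\ e u t, t != v & ~~ e v t].
    by move=> t; apply: (caseB_U se ie ac hpath huniq hdeg).
  have uv := u_neq_v huniq.
  have sUpos : 0 < sS U x.
    have [s Ss] := caseB_ex se ie ac hpath huniq hdeg du.
    rewrite /sS (bigD1 s) //= (_ : U s = true) // mul1r.
    apply: (lt_le_trans (xp s)); rewrite lerDl; apply: sumr_ge0 => j _.
    by apply: mulr_ge0 => //; exact: ler0n.
  pose s := psig u v p.
  have sK : involutive s := psigK huniq.
  pose y := \row_i x 0 (s i).
  have y0 : forall i, 0 <= y 0 i by move=> i; rewrite mxE.
  have ny : nrm y = 1 by rewrite nrm_perm.
  have qy : qf (Bm R g) y = qf (Bm R (mv e u v U)) x.
    rewrite qf_perm //; congr qf; apply/matrixP => i j; rewrite !mxE.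
    rewrite (inj_eq (inv_inj sK)) /g (psig_gts se ie ac hpath huniq hw hdeg).
    by [].
  have qm := qf_move se ie uv hU x.
  have q2 : qf (Bm R g) y <= qf M1 y := qf_le_entry M1ge y0.
  have q3 : qf M1 y <= l1 by have := b1 y; rewrite ny mulr1.
  have h1 : 0 < 2 * (x 0 v - x 0 u) * sS U x.
    by apply: mulr_gt0 => //; apply: mulr_gt0 => //; rewrite subr_gt0.
  lra.
Qed.
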